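(* For $x\in\mathbb{C}\setminus\{1,2,3,\dots\}$ define $y_0(x)=\sum_{k=1}^{\infty}\prod_{j=1}^{k}\frac{1}{x-j}$. Then $y_0$ is a meromorphic solution of $y(x+1)=\frac{1}{x}y(x)+\frac{1}{x}$, with simple poles at the positive integers, $\operatorname{Res}(y_0;x=n)=e^{-1}/\Gamma(n)$ for $n\in\mathbb{N}$, $n\ge1$, and it has the Mittag-Leffler decomposition $$y_0(x)=e^{-1}\sum_{k=1}^{\infty}\frac{1}{(x-k)\,\Gamma(k)}.$$ Moreover, for $\arg x\neq 0$, $y_0(x)$ is asymptotic as $|x|\to\infty$ to the formal power series solution $\tilde y$ of the equation.
   Context: $\tilde y$ denotes the (unique) formal power series solution in powers of $1/x$ of the difference equation $y(x+1)=\frac{1}{x}y(x)+\frac{1}{x}$. *)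

(* Defs.v *)
From Stdlib Require Import Reals ClassicalEpsilon Arith.
From Coquelicot Require Import Coquelicot.
Open Scope R_scope.

Definition posint (x : C) : Prop := exists n : nat, (1 <= n)%nat /\ x = RtoC (INR n).

(* k-th term (k >= 0) of the series: prod_{j=1}^{k+1} 1/(x-j) *)
Fixpoint prod_inv (x : C) (k : nat) : C :=
  match k with
  | O => RtoC 1
  | S k' => Cmult (prod_inv x k') (Cinv (Cminus x (RtoC (INR k))))
  end.

Definition y0_term (x : C) (k : nat) : C := prod_inv x (S k).

Definition y0 (x : C) : C :=
  epsilon (inhabits (RtoC 0)) (fun l : C => is_series (y0_term x) l).

(* Coefficient of x^{-m} in the expansion of (x+1)^{-n} = x^{-n} (1+1/x)^{-n}
   in powers of 1/x:  binom(-n, m-n) = (-1)^(m-n) C(m-1, m-n) for 1 <= n <= m,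
   [m = 0] for n = 0, and 0 for m < n. *)
Definition shift_coef (n m : nat) : R :=
  if Nat.eqb n 0 then (if Nat.eqb m 0 then 1 else 0)
  else if Nat.leb n m then (-1) ^ (m - n) * Binomial.C (m - 1) (m - n)
  else 0.

(* a : nat -> C are the coefficients of a formal power series
   sum_{n>=0} a_n x^{-n} which formally solves y(x+1) = y(x)/x + 1/x:
   comparing coefficients of x^{-m} for every m. *)
Definition formal_solution (a : nat -> C) : Prop :=
  forall m : nat,
    sum_n (fun n => Cmult (RtoC (shift_coef n m)) (a n)) m =
    Cplus (match m with O => RtoC 0 | S m' => a m' end)
          (if Nat.eqb m 1 then RtoC 1 else RtoC 0).

Definition formal_partial (a : nat -> C) (N : nat) (x : C) : C :=
  sum_n (fun n => Cmult (a n) (Cinv (Cpow x n))) N.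

(* Main.v *)
Require Import Defs.
From Stdlib Require Import Reals Arith Lia Lra ClassicalEpsilon Classical.
From Coquelicot Require Import Coquelicot.
Open Scope R_scope.

Ltac Ceq := match goal with |- @eq _ ?a ?b => change (@eq C a b) end.
Ltac Req := match goal with |- @eq _ ?a ?b => change (@eq R a b) end.

Lemma sqrt2_lt2 : sqrt 2 < 2.
Proof.
  pose proof (sqrt_sqrt 2 ltac:(lra)). pose proof (sqrt_pos 2). nra.
Qed.

Lemma locally_C (x : C) (d : R) : 0 < d -> locally x (fun y => Cmod (y - x) < d).
Proof.
  intros Hd. assert (H2: 0 < d/2) by lra.
  exists (mkposreal _ H2). intros y Hy.
  apply C_NormedModule_mixin_compat2 in Hy. simpl in Hy.
  change (minus y x) with (y - x)%C in Hy.
  pose proof sqrt2_lt2. pose proof (sqrt_pos 2).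
  pose proof (Cmod_ge_0 (y - x)%C). nra.
Qed.

Lemma filterlim_C_intro {T} (F : (T -> Prop) -> Prop) (f : T -> C) (l : C) :
  Filter F -> (forall eps, 0 < eps -> F (fun t => Cmod (f t - l) < eps)) ->
  filterlim f F (locally l).
Proof.
  intros HF H. apply filterlim_locally. intros eps.
  specialize (H eps (cond_pos eps)).
  eapply filter_imp; [|exact H]. intros t Ht.
  apply C_NormedModule_mixin_compat1. exact Ht.
Qed.

Lemma sum_n_norm_le (a : nat -> C) (b : nat -> R) :
  (forall n, Cmod (a n) <= b n) -> forall N, Cmod (sum_n a N) <= sum_n b N.
Proof.
  intros H N. induction N.
  - rewrite !sum_O. auto.
  - rewrite !sum_Sn. eapply Rle_trans. apply Cmod_triangle.
    apply Rplus_le_compat; auto.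
Qed.

Lemma series_norm_le (a : nat -> C) (b : nat -> R) l lb :
  is_series a l -> is_series b lb -> (forall n, Cmod (a n) <= b n) -> Cmod l <= lb.
Proof.
  intros Ha Hb H.
  assert (H1 : is_lim_seq (fun N => Cmod (sum_n a N)) (Cmod l)).
  { eapply filterlim_comp. exact Ha. apply (filterlim_norm (V := C_NormedModule)). }
  assert (H2 : is_lim_seq (sum_n b) lb) by exact Hb.
  pose proof (is_lim_seq_le _ _ _ _ (sum_n_norm_le a b H) H1 H2). simpl in H0. exact H0.
Qed.

Lemma is_series_C_unique (a : nat -> C) l1 l2 : is_series a l1 -> is_series a l2 -> l1 = l2.
Proof.
  intros H1 H2. eapply (filterlim_locally_unique (F := eventually)); eauto.
Qed.

Lemma Cinv_0 : Cinv 0 = 0.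
Proof. unfold Cinv. simpl. unfold Rdiv. rewrite !Rmult_0_l. rewrite Ropp_0, Rmult_0_l. reflexivity. Qed.

Lemma Cinv_mult (z w : C) : w <> 0 -> Cinv (z * w) = (Cinv z * Cinv w)%C.
Proof.
  intros Hw. destruct (classic (z = 0)) as [->|Hz].
  - rewrite Cmult_0_l, Cinv_0. ring.
  - field. split; auto.
Qed.

Lemma notpos_neq x k : ~ posint x -> x <> RtoC (INR (S k)).
Proof. intros H E. apply H. exists (S k). split; [lia|exact E]. Qed.

Lemma notpos_shift x n : ~ posint x -> ~ posint (x - RtoC (INR n))%C.
Proof. intros H [m [Hm E]]. apply H. exists (m + n)%nat. split; [lia|].
  rewrite plus_INR, RtoC_plus. rewrite <- E. ring. Qed.

Lemma Cmod_sub_R x t : Rabs t - Cmod x <= Cmod (x - RtoC t).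
Proof.
  rewrite <- Cmod_R.
  assert (E: RtoC t = (x + - (x - RtoC t))%C) by ring.
  rewrite E at 1.
  pose proof (Cmod_triangle x (- (x - RtoC t))%C). rewrite Cmod_opp in H. lra.
Qed.

Lemma Cmod_sub_nat x n : INR n - Cmod x <= Cmod (x - RtoC (INR n)).
Proof. pose proof (Cmod_sub_R x (INR n)). rewrite Rabs_pos_eq in H by apply pos_INR. exact H. Qed.

Lemma sum_f_R0_ge_term (f : nat -> R) K i : (forall j, 0 <= f j) -> (i <= K)%nat -> f i <= sum_f_R0 f K.
Proof.
  intros Hf Hi. induction K.
  - assert (i = 0)%nat by lia. subst. simpl. lra.
  - simpl. destruct (Nat.eq_dec i (S K)).
    + subst. pose proof (cond_pos_sum f K Hf). lra.
    + pose proof (Hf (S K)). assert (i <= K)%nat by lia. specialize (IHK H0). lra.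
Qed.

Lemma geom_dom (p : nat -> R) (K : nat) : (forall k, 0 <= p k) ->
  (forall k, (K <= k)%nat -> p (S k) <= p k / 2) ->
  exists A, 0 <= A /\ forall k, p k <= A * (1/2)^k.
Proof.
  intros Hp H. set (A := sum_f_R0 (fun i => p i * 2^i) K).
  assert (HA: forall i, (i <= K)%nat -> p i * 2 ^ i <= A).
  { intros i Hi. apply (sum_f_R0_ge_term (fun i => p i * 2^i)); auto.
    intros j. apply Rmult_le_pos; auto. apply pow_le; lra. }
  exists A. split. { eapply Rle_trans; [|apply (HA 0%nat); lia]. simpl. rewrite Rmult_1_r. auto. }
  assert (Hhalf: forall i, p i = p i * 2^i * (1/2)^i).
  { intros i. rewrite Rmult_assoc, <- Rpow_mult_distr. replace (2 * (1/2)) with 1 by field.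
    rewrite pow1. ring. }
  induction k.
  - rewrite (Hhalf 0%nat). apply Rmult_le_compat_r. apply pow_le; lra. apply HA; lia.
  - destruct (le_lt_dec (S k) K).
    + rewrite (Hhalf (S k)). apply Rmult_le_compat_r. apply pow_le; lra. apply HA; lia.
    + eapply Rle_trans. apply H. lia. simpl. lra.
Qed.

Lemma nat_above (r : R) : exists K : nat, r <= INR K.
Proof. destruct (INR_unbounded r) as [n Hn]. exists n. lra. Qed.

Lemma prod_inv_S x k : prod_inv x (S k) = (prod_inv x k * / (x - RtoC (INR (S k))))%C.
Proof. reflexivity. Qed.

Lemma Cmod_inv_le (z : C) (m : R) : 0 < m -> m <= Cmod z -> Cmod (/ z) <= / m.
Proof.
  intros Hm Hz. assert (z <> 0). { intro E. subst. rewrite Cmod_0 in Hz. lra. }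
  rewrite Cmod_inv by auto. apply Rinv_le_contravar; lra.
Qed.

Lemma prod_inv_bound x : exists A, 0 <= A /\ forall k, Cmod (prod_inv x k) <= A * (1/2)^k.
Proof.
  destruct (nat_above (Cmod x + 2)) as [K HK].
  apply (geom_dom (fun k => Cmod (prod_inv x k)) K).
  - intros; apply Cmod_ge_0.
  - intros k Hk. rewrite prod_inv_S, Cmod_mult.
    assert (Cmod (/ (x - RtoC (INR (S k)))) <= / 2).
    { apply Cmod_inv_le. lra. pose proof (Cmod_sub_nat x (S k)).
      assert (INR K <= INR (S k)) by (apply le_INR; lia). lra. }
    pose proof (Cmod_ge_0 (prod_inv x k)). nra.
Qed.

Lemma half_series : is_series (fun k => (1/2)^k) 2.
Proof.
  assert (H := is_series_geom (1/2) ltac:(rewrite Rabs_pos_eq; lra)).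
  replace (/ (1 - 1/2)) with 2 in H by field. exact H.
Qed.

Lemma half_series_S : is_series (fun k => (1/2)^(S k)) 1.
Proof.
  apply is_series_ext with (fun k => (1/2)^k * (1/2)). intros; simpl; ring.
  assert (H := is_series_scal_r (1/2) _ _ half_series).
  replace (2 * (1/2)) with 1 in H by field. exact H.
Qed.

Lemma y0_ex x : ex_series (y0_term x).
Proof.
  destruct (prod_inv_bound x) as [A [HA Hb]].
  apply (ex_series_le (V := C_CompleteNormedModule)) with (b := fun k => (1/2)^(S k) * A).
  - intros n. eapply Rle_trans. apply (Hb (S n)). lra.
  - exists (1 * A). apply is_series_scal_r. apply half_series_S.
Qed.

Lemma y0_is x : is_series (y0_term x) (y0 x).
Proof. unfold y0. apply epsilon_spec. apply y0_ex. Qed.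

Lemma y0_eq x l : is_series (y0_term x) l -> y0 x = l.
Proof. intros H. eapply is_series_C_unique. apply y0_is. exact H. Qed.

Definition cc (k : nat) : R := exp (-1) / INR (fact k).
Definition mlt (x : C) (k : nat) : C :=
  Cmult (RtoC (exp (-1))) (Cinv (Cmult (Cminus x (RtoC (INR (S k)))) (RtoC (INR (fact k))))).

Lemma RtoC_fact_neq k : RtoC (INR (fact k)) <> 0.
Proof. intro E. apply RtoC_inj in E. apply (INR_fact_neq_0 k). exact E. Qed.

Lemma mlt_eq x k : mlt x k = (RtoC (cc k) * / (x - RtoC (INR (S k))))%C.
Proof.
  unfold mlt, cc. rewrite Cinv_mult by apply RtoC_fact_neq.
  rewrite RtoC_div by apply INR_fact_neq_0. unfold Cdiv. ring.
Qed.

Lemma cc_pos k : 0 < cc k.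
Proof. unfold cc. apply Rdiv_lt_0_compat. apply exp_pos. apply INR_fact_lt_0. Qed.

Lemma exp1_series : is_series (fun k => / INR (fact k)) (exp 1).
Proof.
  apply (is_series_ext (fun i => / INR (fact i) * 1^i)).
  - intros n. rewrite pow1. apply Rmult_1_r.
  - apply is_series_Reals. exact (proj2_sig (exist_exp 1)).
Qed.

Lemma cc_series : is_series cc 1.
Proof.
  assert (H := is_series_scal_r (exp (-1)) _ _ exp1_series).
  replace (exp 1 * exp (-1)) with 1 in H.
  - assert (E: forall n, / INR (fact n) * exp (-1) = cc n) by (intros; unfold cc, Rdiv; ring).
    eapply is_series_ext; [|exact H]. exact E.
  - rewrite <- exp_plus. replace (1 + -1) with 0 by ring. rewrite exp_0. auto.
Qed.

Lemma sum_n_RtoC (a : nat -> R) N : sum_n (fun k => RtoC (a k)) N = RtoC (sum_n a N).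
Proof.
  induction N.
  - rewrite !sum_O. auto.
  - rewrite !sum_Sn, IHN. simpl. unfold plus; simpl. rewrite RtoC_plus. auto.
Qed.

Lemma is_series_RtoC (a : nat -> R) l : is_series a l -> is_series (fun k => RtoC (a k)) (RtoC l).
Proof.
  intros H. unfold is_series. apply filterlim_C_intro. apply eventually_filter.
  intros eps Heps. pose proof (proj1 (filterlim_locally _ _) H (mkposreal _ Heps)) as H'.
  eapply filter_imp; [|exact H']. intros N HN. simpl in HN.
  rewrite sum_n_RtoC. rewrite <- RtoC_minus, Cmod_R. exact HN.
Qed.

Lemma eventually_bounded (f : nat -> R) K : (forall k, (K <= k)%nat -> f k <= 1) ->
  exists B, 0 < B /\ forall k, f k <= B.
Proof.
  intros H. exists (1 + sum_f_R0 (fun i => Rabs (f i)) K).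
  pose proof (cond_pos_sum (fun i => Rabs (f i)) K (fun j => Rabs_pos _)).
  split. lra.
  intros k. destruct (le_lt_dec K k) as [l|l].
  - specialize (H k l). lra.
  - pose proof (sum_f_R0_ge_term (fun i => Rabs (f i)) K k (fun j => Rabs_pos _) ltac:(lia)).
    simpl in H1. pose proof (Rle_abs (f k)). lra.
Qed.

Lemma inv_bound x : exists B, 0 < B /\ forall k, Cmod (/ (x - RtoC (INR (S k)))) <= B.
Proof.
  destruct (nat_above (Cmod x + 1)) as [K HK].
  apply (eventually_bounded (fun k => Cmod (/ (x - RtoC (INR (S k))))) K).
  intros k Hk. replace 1 with (/1) by field. apply Cmod_inv_le. lra.
  pose proof (Cmod_sub_nat x (S k)). assert (INR K <= INR (S k)) by (apply le_INR; lia). lra.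
Qed.

Lemma Cmod_RtoC_pos r : 0 <= r -> Cmod (RtoC r) = r.
Proof. intros H. rewrite Cmod_R. apply Rabs_pos_eq. exact H. Qed.

Lemma mlt_bound x : exists B, 0 < B /\ forall k, Cmod (mlt x k) <= B * cc k.
Proof.
  destruct (inv_bound x) as [B [HB H]]. exists B. split; auto. intros k.
  rewrite mlt_eq, Cmod_mult, Cmod_RtoC_pos by (left; apply cc_pos).
  pose proof (cc_pos k). specialize (H k). nra.
Qed.

Lemma ml_ex x : ex_series (mlt x).
Proof.
  destruct (mlt_bound x) as [B [HB H]].
  apply (ex_series_le (V := C_CompleteNormedModule)) with (b := fun k => cc k * B).
  - intros n. rewrite Rmult_comm. apply H.
  - exists (1 * B). apply is_series_scal_r. apply cc_series.
Qed.

Definition mlv (x : C) : C := epsilon (inhabits (RtoC 0)) (fun l : C => is_series (mlt x) l).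

Lemma mlv_is x : is_series (mlt x) (mlv x).
Proof. unfold mlv. apply epsilon_spec. apply ml_ex. Qed.

Lemma mlv_eq x l : is_series (mlt x) l -> mlv x = l.
Proof. intros H. eapply is_series_C_unique. apply mlv_is. exact H. Qed.

Lemma prod_inv_shift x k : prod_inv (x + 1)%C (S k) = (/ x * prod_inv x k)%C.
Proof.
  induction k.
  - change (prod_inv (x+1)%C 1) with (RtoC 1 * / ((x+1) - RtoC (INR 1)))%C.
    change (prod_inv x 0) with (RtoC 1). change (INR 1) with 1.
    replace ((x + 1) - RtoC 1)%C with x by ring. ring.
  - rewrite prod_inv_S, IHk, (prod_inv_S x k).
    replace ((x+1) - RtoC (INR (S (S k))))%C with (x - RtoC (INR (S k)))%C. ring.
    rewrite (S_INR (S k)), RtoC_plus. ring.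
Qed.

Lemma FE_y0 x : y0 (x + 1)%C = (/ x * y0 x + / x)%C.
Proof.
  apply y0_eq.
  assert (H : is_series (prod_inv x) (y0 x + 1)%C).
  { apply is_series_decr_1.
    match goal with |- is_series _ ?L => replace L with (y0 x) end.
    - apply y0_is.
    - change (prod_inv x 0) with (RtoC 1). change plus with Cplus. change opp with Copp. Ceq. ring. }
  apply (is_series_scal_l (/ x)%C) in H.
  replace (/ x * y0 x + / x)%C with (scal (/ x)%C (y0 x + 1)%C).
  - eapply is_series_ext; [|exact H]. intros n. unfold y0_term. rewrite prod_inv_shift. reflexivity.
  - change scal with Cmult. Ceq. ring.
Qed.

Lemma FE_ml z : (forall k, z <> RtoC (INR k)) -> (z * mlv (z + 1) = mlv z + 1)%C.
Proof.
  intros Hz.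
  set (e := fun k => match k with O => RtoC 0 | S j => mlt z j end).
  assert (Hterm : forall k, (z * mlt (z + 1) k = RtoC (cc k) + e k)%C).
  { intros k. rewrite mlt_eq.
    replace ((z + 1) - RtoC (INR (S k)))%C with (z - RtoC (INR k))%C
      by (rewrite S_INR, RtoC_plus; ring).
    destruct k as [|j].
    - simpl e. change (INR 0) with 0. replace (z - RtoC 0)%C with z by ring.
      field. specialize (Hz 0%nat). exact Hz.
    - simpl e. rewrite mlt_eq.
      assert (Hc : cc (S j) * INR (S j) = cc j).
      { unfold cc. rewrite fact_simpl, mult_INR. field. split. apply INR_fact_neq_0. apply not_0_INR. lia. }
      assert (Hc' : RtoC (cc j) = (RtoC (cc (S j)) * RtoC (INR (S j)))%C)
        by (rewrite <- RtoC_mult, Hc; reflexivity).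
      rewrite Hc'. field. intro E. apply (Hz (S j)). apply (proj2 (Ceq_minus _ _)). exact E. }
  assert (He : is_series e (mlv z)).
  { apply is_series_decr_1. match goal with |- is_series _ ?L => replace L with (mlv z) end.
    - eapply is_series_ext; [|apply mlv_is]. reflexivity.
    - simpl e. change plus with Cplus; change opp with Copp. Ceq. ring. }
  assert (Hs := is_series_plus _ _ _ _ (is_series_RtoC _ _ cc_series) He).
  assert (Hs2 := is_series_scal_l z _ _ (mlv_is (z+1)%C)).
  transitivity (plus (RtoC 1) (mlv z)).
  - eapply is_series_C_unique. exact Hs2. eapply is_series_ext; [|exact Hs].
    intros n. symmetry. apply Hterm.
  - change plus with Cplus. ring.
Qed.

Lemma notpos_neq_all x : ~ posint (x + 1)%C -> forall k, x <> RtoC (INR k).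
Proof. intros H k E. apply H. exists (S k). split. lia. rewrite E, S_INR, RtoC_plus. reflexivity. Qed.

Lemma FE_g z : ~ posint (z+1)%C -> (y0 (z+1) - mlv (z+1) = / z * (y0 z - mlv z))%C.
Proof.
  intros H. pose proof (notpos_neq_all z H) as Hz.
  assert (Hz0 : z <> 0) by (intro E; apply (Hz 0%nat); rewrite E; reflexivity).
  rewrite FE_y0. pose proof (FE_ml z Hz) as E.
  assert (E2 : mlv (z+1) = (/ z * (mlv z + 1))%C). { rewrite <- E. field. auto. }
  rewrite E2. ring.
Qed.

Lemma g_iter x (Hx : ~ posint x) n :
  (y0 x - mlv x = (y0 (x - RtoC (INR n)) - mlv (x - RtoC (INR n))) * prod_inv x n)%C.
Proof.
  induction n.
  - change (INR 0) with 0. change (prod_inv x 0) with (RtoC 1).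
    replace (x - RtoC 0)%C with x by ring. ring.
  - rewrite IHn. rewrite prod_inv_S. set (z := (x - RtoC (INR (S n)))%C).
    assert (Ez : (x - RtoC (INR n))%C = (z + 1)%C) by (unfold z; rewrite S_INR, RtoC_plus; ring).
    rewrite Ez, FE_g. ring.
    rewrite <- Ez. apply notpos_shift; auto.
Qed.

Lemma y0_small z : (forall j, 2 <= Cmod (z - RtoC (INR (S j)))) -> Cmod (y0 z) <= 1.
Proof.
  intros H.
  assert (Hp : forall k, Cmod (prod_inv z k) <= (1/2)^k).
  { induction k.
    - change (prod_inv z 0) with (RtoC 1). rewrite Cmod_1. simpl. lra.
    - rewrite prod_inv_S, Cmod_mult.
      assert (Cmod (/ (z - RtoC (INR (S k)))) <= / 2) by (apply Cmod_inv_le; auto; lra).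
      simpl. rewrite Rmult_comm. apply Rmult_le_compat; auto using Cmod_ge_0. replace (1/2) with (/2) by field. auto. }
  apply (series_norm_le _ _ _ _ (y0_is z) half_series_S). intros n. apply Hp.
Qed.

Lemma mlv_small z : (forall j, 1 <= Cmod (z - RtoC (INR (S j)))) -> Cmod (mlv z) <= 1.
Proof.
  intros H.
  apply (series_norm_le _ _ _ _ (mlv_is z) cc_series). intros k.
  rewrite mlt_eq, Cmod_mult, Cmod_RtoC_pos by (left; apply cc_pos).
  assert (Cmod (/ (z - RtoC (INR (S k)))) <= / 1) by (apply Cmod_inv_le; auto; lra).
  pose proof (cc_pos k). nra.
Qed.

Lemma Cmod_sub_le a b : Cmod (a - b) <= Cmod a + Cmod b.
Proof. pose proof (Cmod_triangle a (- b)%C). rewrite Cmod_opp in H. exact H. Qed.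

Lemma y0_ml x : ~ posint x -> y0 x = mlv x.
Proof.
  intros Hx.
  destruct (prod_inv_bound x) as [A [HA Hb]].
  destruct (nat_above (Cmod x + 1)) as [N0 HN0].
  assert (Hbnd: forall n, (N0 <= n)%nat -> Cmod (y0 x - mlv x) <= 2 * (A * (1/2)^n)).
  { intros n Hn. rewrite (g_iter x Hx n), Cmod_mult.
    set (z := (x - RtoC (INR n))%C).
    assert (Hj : forall j, 2 <= Cmod (z - RtoC (INR (S j)))).
    { intros j. unfold z. replace (x - RtoC (INR n) - RtoC (INR (S j)))%C
        with (x - RtoC (INR (n + S j)))%C by (rewrite plus_INR, RtoC_plus; ring).
      pose proof (Cmod_sub_nat x (n + S j)).
      assert (INR N0 + 1 <= INR (n + S j)) by (rewrite <- S_INR; apply le_INR; lia). lra. }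
    assert (Cmod (y0 z) <= 1) by (apply y0_small; auto).
    assert (Cmod (mlv z) <= 1) by (apply mlv_small; intros j; specialize (Hj j); lra).
    pose proof (Cmod_sub_le (y0 z) (mlv z)).
    pose proof (Hb n). pose proof (Cmod_ge_0 (prod_inv x n)).
    pose proof (Cmod_ge_0 (y0 z - mlv z)). nra. }
  apply Ceq_minus. apply Cmod_eq_0.
  apply Rle_antisym; [|apply Cmod_ge_0].
  apply Rnot_lt_le. intro Hpos. set (d := Cmod (y0 x - mlv x)) in *.
  assert (Hq : Rabs (1/2) < 1) by (rewrite Rabs_pos_eq; lra).
  assert (Hd : 0 < d / (2 * A + 1)) by (apply Rdiv_lt_0_compat; lra).
  destruct (pow_lt_1_zero (1/2) Hq (d / (2 * A + 1)) Hd) as [N HN].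
  specialize (HN (max N N0) (Nat.le_max_l _ _)). specialize (Hbnd (max N N0) (Nat.le_max_r _ _)).
  set (q := (1/2)^(max N N0)) in *.
  assert (q0 : 0 <= q) by (unfold q; apply pow_le; lra).
  rewrite Rabs_pos_eq in HN by exact q0.
  assert (HN' : q * (2*A+1) < d).
  { replace d with (d / (2*A+1) * (2*A+1)) by (field; lra). apply Rmult_lt_compat_r; lra. }
  nra.
Qed.

Lemma ml_term_diff x y a (c : R) : (x - a <> 0)%C -> (y - a <> 0)%C ->
  (RtoC c * / (y - a) - RtoC c * / (x - a) + RtoC c * / (x - a) * / (x - a) * (y - x) =
   RtoC c * (y - x) * (y - x) * / (x - a) * / (x - a) * / (y - a))%C.
Proof. intros. field. split; auto. Qed.

Lemma notpos_sub_neq x k : ~ posint x -> (x - RtoC (INR (S k)))%C <> 0.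
Proof. intros Hx E. apply (notpos_neq x k Hx). apply Ceq_minus. exact E. Qed.

Lemma inv_lower x B : ~ posint x -> 0 < B -> (forall k, Cmod (/ (x - RtoC (INR (S k)))) <= B) ->
  forall k, / B <= Cmod (x - RtoC (INR (S k))).
Proof.
  intros Hx HB HBb k. specialize (HBb k). pose proof (notpos_sub_neq x k Hx) as Hne.
  rewrite Cmod_inv in HBb by auto. pose proof (proj1 (Cmod_gt_0 _) Hne) as H1.
  apply Rinv_le_contravar in HBb. rewrite Rinv_inv in HBb. exact HBb.
  apply Rinv_0_lt_compat; auto.
Qed.

Lemma locally_CA (x : C) (d : R) : 0 < d ->
  @locally (AbsRing_UniformSpace C_AbsRing) x (fun y => Cmod (y - x) < d).
Proof. intros Hd. exists (mkposreal _ Hd). intros y Hy. exact Hy. Qed.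

Lemma y0_deriv x : ~ posint x -> @ex_derive C_AbsRing C_NormedModule y0 x.
Proof.
  intros Hx. destruct (inv_bound x) as [B [HB HBb]].
  pose proof (inv_lower x B Hx HB HBb) as Hxa.
  set (ix := fun k => (/ (x - RtoC (INR (S k))))%C).
  set (Dt := fun k => (RtoC (cc k) * ix k * ix k)%C).
  assert (HDex : ex_series Dt).
  { apply (ex_series_le (V := C_CompleteNormedModule)) with (b := fun k => cc k * (B * B)).
    - intros n. change norm with Cmod. unfold Dt. rewrite !Cmod_mult.
      rewrite Cmod_RtoC_pos by (left; apply cc_pos).
      pose proof (HBb n). pose proof (cc_pos n). pose proof (Cmod_ge_0 (ix n)).
      unfold ix in *. rewrite Rmult_assoc. apply Rmult_le_compat_l. lra.
      apply Rmult_le_compat; auto.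
    - exists (1 * (B * B)). apply is_series_scal_r. apply cc_series. }
  destruct HDex as [DS HDS].
  exists (- DS)%C.
  split. apply is_linear_scal_l.
  intros xp Hxp. apply (is_filter_lim_locally_unique (K := C_AbsRing) (V := AbsRing_NormedModule C_AbsRing)) in Hxp. subst xp.
  intros eps.
  set (d := / B).
  assert (Hd : 0 < d) by (apply Rinv_0_lt_compat; auto).
  set (K := 2 * B * B * B).
  assert (HK : 0 < K) by (unfold K; repeat apply Rmult_lt_0_compat; lra).
  set (del := Rmin (d/2) (eps / K)).
  assert (Hdel : 0 < del).
  { apply Rmin_pos. lra. apply Rdiv_lt_0_compat; auto. apply cond_pos. }
  eapply filter_imp; [| apply (locally_CA x del Hdel)].
  intros y Hy. cbv beta in Hy. unfold del in Hy.
  assert (Hy1 : Cmod (y - x) < d / 2) by (pose proof (Rmin_l (d/2) (eps/K)); lra).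
  assert (Hy2 : Cmod (y - x) < eps / K) by (pose proof (Rmin_r (d/2) (eps/K)); lra).
  assert (Hya : forall k, d/2 <= Cmod (y - RtoC (INR (S k)))).
  { intros k. pose proof (Hxa k).
    pose proof (Cmod_triangle (x - y)%C (y - RtoC (INR (S k)))%C).
    replace (x - y + (y - RtoC (INR (S k))))%C with (x - RtoC (INR (S k)))%C in H0 by ring.
    replace (Cmod (x - y)) with (Cmod (y - x)) in H0.
    - fold d in H. lra.
    - replace (x - y)%C with (- (y - x))%C by ring. symmetry. apply Cmod_opp. }
  assert (Hy_np : ~ posint y).
  { intros [m [Hm E]]. destruct m; [lia|]. specialize (Hya m). rewrite E in Hya.
    replace (RtoC (INR (S m)) - RtoC (INR (S m)))%C with (RtoC 0) in Hya by ring.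
    rewrite Cmod_0 in Hya. lra. }
  rewrite (y0_ml y Hy_np), (y0_ml x Hx).
  unfold minus. change plus with Cplus. change opp with Copp. change scal with Cmult.
  change norm with Cmod.
  set (iy := fun k => (/ (y - RtoC (INR (S k))))%C).
  set (rt := fun k => (RtoC (cc k) * (y - x) * (y - x) * ix k * ix k * iy k)%C).
  assert (Hrt : is_series rt (mlv y - mlv x + DS * (y - x))%C).
  { assert (H1 := is_series_minus _ _ _ _ (mlv_is y) (mlv_is x)).
    assert (H2 := is_series_scal_l (y - x)%C _ _ HDS).
    assert (H3 := is_series_plus _ _ _ _ H1 H2).
    replace (mlv y - mlv x + DS * (y - x))%C with
      (plus (plus (mlv y) (opp (mlv x))) (scal (y - x)%C DS)).
    - eapply is_series_ext; [|exact H3]. intros n. unfold rt, Dt, ix, iy.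
      change plus with Cplus. change opp with Copp. change scal with Cmult.
      rewrite !mlt_eq. Ceq. rewrite <- ml_term_diff.
      + ring.
      + apply notpos_sub_neq; auto.
      + apply notpos_sub_neq; auto.
    - change plus with Cplus. change opp with Copp. change scal with Cmult. Ceq. ring. }
  replace (mlv y + - mlv x + - ((y + - x) * - DS))%C with (mlv y - mlv x + DS * (y - x))%C
    by ring.
  set (m := Cmod (y - x)).
  assert (Hm0 : 0 <= m) by apply Cmod_ge_0.
  assert (Hbound : Cmod (mlv y - mlv x + DS * (y - x))%C <= 1 * (m * m * (B * B * (2 * B)))).
  { apply (series_norm_le _ _ _ _ Hrt (is_series_scal_r _ _ _ cc_series)).
    intros k. unfold rt. rewrite !Cmod_mult. rewrite Cmod_RtoC_pos by (left; apply cc_pos).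
    fold m. pose proof (cc_pos k).
    assert (Hix : Cmod (ix k) <= B) by apply HBb.
    assert (Hiy : Cmod (iy k) <= 2 * B).
    { unfold iy. replace (2 * B) with (/ (d / 2)) by (unfold d; field; lra).
      apply Cmod_inv_le. lra. apply Hya. }
    pose proof (Cmod_ge_0 (ix k)). pose proof (Cmod_ge_0 (iy k)).
    replace (cc k * m * m * Cmod (ix k) * Cmod (ix k) * Cmod (iy k)) with
      (cc k * (m * m * (Cmod (ix k) * Cmod (ix k) * Cmod (iy k)))) by ring.
    apply Rmult_le_compat_l. lra. apply Rmult_le_compat_l. nra.
    apply Rmult_le_compat; try nra. }
  assert (HmK : m * K <= eps).
  { pose proof (cond_pos eps). apply Rlt_le. apply (Rmult_lt_compat_r K) in Hy2; auto.
    unfold Rdiv in Hy2. rewrite Rmult_assoc, Rinv_l in Hy2 by lra. fold m in Hy2. lra. }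
  unfold K in HmK. change (Cmod (y + - x)) with m.
  pose proof (Rmult_le_compat_l m _ _ Hm0 HmK). pose proof (cond_pos eps). nra.
Qed.

Lemma delta_sum (m : nat) (v : C) N :
  sum_n (fun k => if Nat.eqb k m then v else RtoC 0) N = if Nat.leb m N then v else RtoC 0.
Proof.
  induction N.
  - rewrite sum_O. destruct m; reflexivity.
  - rewrite sum_Sn, IHN. change plus with Cplus.
    destruct (Nat.leb_spec m N); destruct (Nat.eqb_spec (S N) m);
      destruct (Nat.leb_spec m (S N)); try lia; Ceq; ring.
Qed.

Lemma delta_series (m : nat) (v : C) : is_series (fun k => if Nat.eqb k m then v else RtoC 0) v.
Proof.
  unfold is_series. apply filterlim_ext_loc with (fun _ => v).
  - exists m. intros N HN. rewrite delta_sum. destruct (Nat.leb_spec m N); [reflexivity|lia].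
  - apply filterlim_const.
Qed.

Lemma residue n : (1 <= n)%nat ->
     filterlim (fun x : C => Cmult (Cminus x (RtoC (INR n))) (y0 x))
       (within (fun x : C => x <> RtoC (INR n)) (locally (RtoC (INR n))))
       (locally (RtoC (exp (-1) / INR (fact (n - 1))))).
Proof.
  intros Hn. destruct n as [|m]; [lia|].
  replace (S m - 1)%nat with m by lia. change (exp (-1) / INR (fact m)) with (cc m).
  apply filterlim_C_intro. apply within_filter. apply locally_filter.
  intros eps Heps.
  set (a := RtoC (INR (S m))).
  set (del := Rmin (1/2) (eps/3)).
  assert (Hdel : 0 < del) by (apply Rmin_pos; lra).
  unfold within. eapply filter_imp; [|apply (locally_C a del Hdel)].
  intros x Hx Hxa. cbv beta in Hx. unfold del in Hx.
  assert (Hx1 : Cmod (x - a) < 1/2) by (pose proof (Rmin_l (1/2) (eps/3)); lra).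
  assert (Hx2 : Cmod (x - a) < eps/3) by (pose proof (Rmin_r (1/2) (eps/3)); lra).
  assert (Hk : forall k, k <> m -> 1/2 <= Cmod (x - RtoC (INR (S k)))).
  { intros k Hkm.
    assert (H1 : 1 <= Cmod (a - RtoC (INR (S k)))).
    { unfold a. rewrite <- RtoC_minus, Cmod_R.
      destruct (lt_eq_lt_dec k m) as [[H|H]|H]; [| lia |].
      - rewrite Rabs_pos_eq. assert (INR (S k) + 1 <= INR (S m)) by (rewrite <- S_INR; apply le_INR; lia). lra.
        assert (INR (S k) <= INR (S m)) by (apply le_INR; lia). lra.
      - rewrite Rabs_left1. assert (INR (S m) + 1 <= INR (S k)) by (rewrite <- S_INR; apply le_INR; lia). lra.
        assert (INR (S m) <= INR (S k)) by (apply le_INR; lia). lra. }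
    pose proof (Cmod_triangle (a - x)%C (x - RtoC (INR (S k)))%C).
    replace (a - x + (x - RtoC (INR (S k))))%C with (a - RtoC (INR (S k)))%C in H by ring.
    replace (Cmod (a - x)) with (Cmod (x - a)) in H.
    - lra.
    - replace (a - x)%C with (- (x - a))%C by ring. symmetry. apply Cmod_opp. }
  assert (Hnp : ~ posint x).
  { intros [j [Hj E]]. destruct j as [|k]; [lia|].
    destruct (Nat.eq_dec k m) as [->|Hkm].
    - apply Hxa. exact E.
    - specialize (Hk k Hkm). rewrite E in Hk.
      replace (RtoC (INR (S k)) - RtoC (INR (S k)))%C with (RtoC 0) in Hk by ring.
      rewrite Cmod_0 in Hk. lra. }
  rewrite (y0_ml x Hnp).
  assert (Hxa0 : (x - a)%C <> 0) by (intro E; apply Hxa; apply Ceq_minus; exact E).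
  set (dl := fun k : nat => if Nat.eqb k m then RtoC (cc m) else RtoC 0).
  assert (Hs := is_series_minus _ _ _ _ (is_series_scal_l (x - a)%C _ _ (mlv_is x)) (delta_series m (RtoC (cc m)))).
  assert (Hb := is_series_scal_r (2 * Cmod (x - a)) _ _ cc_series).
  assert (HH := series_norm_le _ _ _ _ Hs Hb).
  change plus with Cplus in HH. change opp with Copp in HH. change scal with Cmult in HH.
  assert (Cmod ((x - a) * mlv x + - RtoC (cc m))%C <= 1 * (2 * Cmod (x - a))).
  { apply HH. intros k. cbv beta. rewrite mlt_eq.
    destruct (Nat.eqb_spec k m) as [->|Hkm].
    - replace ((x - a) * (RtoC (cc m) * / (x - RtoC (INR (S m)))) + - RtoC (cc m))%C with (RtoC 0).
      + rewrite Cmod_0. pose proof (cc_pos m). pose proof (Cmod_ge_0 (x - a)). nra.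
      + fold a. field. exact Hxa0.
    - rewrite Copp_0, Cplus_0_r, !Cmod_mult.
      rewrite Cmod_RtoC_pos by (left; apply cc_pos).
      assert (Cmod (/ (x - RtoC (INR (S k)))) <= 2).
      { replace 2 with (/ (1/2)) by field. apply Cmod_inv_le. lra. apply Hk; auto. }
      pose proof (cc_pos k). pose proof (Cmod_ge_0 (x - a)).
      pose proof (Rmult_le_pos (cc k) (Cmod (x - a)) ltac:(lra) ltac:(lra)). nra. }
  replace ((x - a) * mlv x - RtoC (cc m))%C with ((x - a) * mlv x + - RtoC (cc m))%C by ring. lra.
Qed.

Definition bt (j k : nat) : R := cc k * INR (S k) ^ j.

Lemma cc_S k : cc (S k) = cc k / INR (S k).
Proof. unfold cc. rewrite fact_simpl, mult_INR. field. split. apply INR_fact_neq_0. apply not_0_INR. lia. Qed.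

Lemma bt_nonneg j k : 0 <= bt j k.
Proof. unfold bt. apply Rmult_le_pos. left; apply cc_pos. apply pow_le. apply pos_INR. Qed.

Lemma bt_ex j : ex_series (bt j).
Proof.
  destruct (nat_above (2 ^ (S j))) as [K HK].
  destruct (geom_dom (bt j) K (bt_nonneg j)) as [A [HA Hb]].
  { intros k Hk. unfold bt. rewrite cc_S.
    assert (Hk1 : 0 < INR (S k)) by (apply lt_0_INR; lia).
    assert (HKk : 2 ^ S j <= INR (S k)) by (eapply Rle_trans; [exact HK|apply le_INR; lia]).
    assert (H2 : INR (S (S k)) ^ j <= 2 ^ j * INR (S k) ^ j).
    { rewrite <- Rpow_mult_distr. apply pow_incr. split. apply pos_INR.
      rewrite !S_INR. pose proof (pos_INR k). lra. }
    pose proof (cc_pos k). pose proof (pow_le (INR (S k)) j (pos_INR _)).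
    assert (H3 : cc k / INR (S k) * INR (S (S k)) ^ j <= cc k * INR (S k) ^ j * (2 ^ j / INR (S k))).
    { unfold Rdiv. replace (cc k * INR (S k) ^ j * (2 ^ j * / INR (S k))) with
        (cc k * / INR (S k) * (2 ^ j * INR (S k) ^ j)) by ring.
      apply Rmult_le_compat_l; auto. apply Rmult_le_pos. lra. left. apply Rinv_0_lt_compat. lra. }
    assert (H4 : 2 ^ j / INR (S k) <= / 2).
    { change (2 ^ S j) with (2 * 2 ^ j) in HKk. unfold Rdiv. apply (Rmult_le_reg_r (INR (S k))); auto.
      rewrite Rmult_assoc, Rinv_l by lra. rewrite Rmult_1_r.
      apply (Rmult_le_reg_l 2); [lra|]. rewrite <- Rmult_assoc, Rinv_r, Rmult_1_l by lra. lra. }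
    pose proof (Rmult_le_pos _ _ (Rlt_le _ _ H) H0).
    eapply Rle_trans. exact H3. unfold Rdiv at 2. apply Rmult_le_compat_l; auto. }
  apply (ex_series_le (V := R_CompleteNormedModule)) with (b := fun k => (1/2)^k * A).
  - intros n. change norm with Rabs. rewrite Rabs_pos_eq by apply bt_nonneg. rewrite Rmult_comm. apply Hb.
  - exists (2 * A). apply is_series_scal_r. apply half_series.
Qed.

Definition bb (j : nat) : R := Series (bt j).
Lemma bb_is j : is_series (bt j) (bb j).
Proof. apply Series_correct. apply bt_ex. Qed.

Definition bseq (n : nat) : R := match n with O => 0 | S j => bb j end.

Lemma is_series_sum_n {K : AbsRing} {V : NormedModule K} (f : nat -> nat -> V) (l : nat -> V) m :
  (forall j, (j <= m)%nat -> is_series (f j) (l j)) ->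
  is_series (fun k => sum_n (fun j => f j k) m) (sum_n l m).
Proof.
  induction m; intros H.
  - rewrite sum_O. eapply is_series_ext; [|apply H; lia]. intros; rewrite sum_O; auto.
  - rewrite sum_Sn. eapply is_series_ext;
      [| apply is_series_plus; [apply IHm; intros; apply H; lia | apply H; lia]].
    intros; rewrite sum_Sn; auto.
Qed.

Lemma binom_n0 n : Binomial.C n 0 = 1.
Proof. unfold Binomial.C. rewrite Nat.sub_0_r. change (INR (fact 0)) with 1. rewrite Rmult_1_l. apply Rinv_r. apply INR_fact_neq_0. Qed.

Lemma shift_coef_diag m : shift_coef m m = 1.
Proof.
  unfold shift_coef. destruct m. reflexivity.
  replace (Nat.eqb (S m) 0) with false by reflexivity. rewrite Nat.leb_refl, Nat.sub_diag.
  rewrite binom_n0. simpl. ring.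
Qed.

Lemma shift_coef_0S m : shift_coef 0 (S m) = 0.
Proof. reflexivity. Qed.

Lemma shift_coef_SS j m : (j <= m)%nat -> shift_coef (S j) (S m) = (-1) ^ (m - j) * Binomial.C m (m - j).
Proof.
  intros H. unfold shift_coef. replace (Nat.eqb (S j) 0) with false by reflexivity.
  replace (Nat.leb (S j) (S m)) with true by (symmetry; apply Nat.leb_le; lia).
  replace (S m - S j)%nat with (m - j)%nat by lia. replace (S m - 1)%nat with m by lia. reflexivity.
Qed.

Lemma binom_inner m k :
  sum_n (fun j => (-1) ^ (m - j) * Binomial.C m (m - j) * bt j k) m = cc k * INR k ^ m.
Proof.
  rewrite sum_n_Reals.
  replace (INR k) with (INR (S k) + -1) by (rewrite S_INR; ring).
  rewrite binomial.
  rewrite scal_sum.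
  apply sum_eq. intros i Hi. unfold bt. rewrite <- pascal_step1 by lia. ring.
Qed.

Lemma is_series_Rscal (c : R) (a : nat -> R) l : is_series a l -> is_series (fun n => c * a n) (c * l).
Proof. intros H. exact (is_series_scal_l c a l H). Qed.

Lemma ccpow_series_S m : is_series (fun k => cc k * INR k ^ S m) (bb m).
Proof.
  apply is_series_decr_1.
  match goal with |- is_series _ ?L => replace L with (bb m) end.
  - eapply is_series_ext; [|apply bb_is]. intros k. unfold bt.
    rewrite cc_S. change (INR (S k) ^ S m) with (INR (S k) * INR (S k) ^ m). unfold Rdiv. Req. field. apply not_0_INR. lia.
  - change plus with Rplus. change opp with Ropp. Req. simpl. ring.
Qed.

Lemma bseq_rel m : sum_n (fun n => shift_coef n m * bseq n) m =
   (match m with O => 0 | S m' => bseq m' end) + (if Nat.eqb m 1 then 1 else 0).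
Proof.
  destruct m as [|m'].
  - rewrite sum_O. simpl. ring.
  - rewrite sum_n_Reals. rewrite decomp_sum by lia. simpl pred.
    rewrite shift_coef_0S. rewrite <- sum_n_Reals.
    rewrite (sum_n_ext_loc _ (fun j => (-1) ^ (m' - j) * Binomial.C m' (m' - j) * bb j)).
    2: { intros j Hj. rewrite shift_coef_SS by lia. reflexivity. }
    assert (Hs : is_series (fun k => sum_n (fun j => (-1) ^ (m' - j) * Binomial.C m' (m' - j) * bt j k) m')
                   (sum_n (fun j => (-1) ^ (m' - j) * Binomial.C m' (m' - j) * bb j) m')).
    { apply (is_series_sum_n (fun j k => (-1) ^ (m' - j) * Binomial.C m' (m' - j) * bt j k)).
      intros j _. apply (is_series_Rscal ((-1) ^ (m' - j) * Binomial.C m' (m' - j))). apply bb_is. }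
    apply (is_series_ext _ (fun k => cc k * INR k ^ m')) in Hs.
    2: { intros k. apply binom_inner. }
    apply is_series_unique in Hs. rewrite <- Hs. rewrite Rmult_0_l, Rplus_0_l.
    destruct m' as [|m''].
    + replace (bseq 0 + (if Nat.eqb 1 1 then 1 else 0)) with 1 by (simpl; ring).
      apply is_series_unique. eapply is_series_ext; [|apply cc_series]. intros k. simpl. Req. ring.
    + replace (Nat.eqb (S (S m'')) 1) with false by reflexivity. simpl bseq.
      rewrite Rplus_0_r.
      apply is_series_unique. apply ccpow_series_S.
Qed.

Lemma sum_n_C_sub (f g : nat -> C) N : sum_n (fun n => (f n - g n)%C) N = (sum_n f N - sum_n g N)%C.
Proof.
  induction N.
  - rewrite !sum_O. reflexivity.
  - rewrite !sum_Sn, IHN. change plus with Cplus. Ceq. ring.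
Qed.

Lemma sum_n_C_zero (f : nat -> C) N : (forall n, (n <= N)%nat -> f n = RtoC 0) -> sum_n f N = RtoC 0.
Proof.
  induction N; intros H.
  - rewrite sum_O. apply H. lia.
  - rewrite sum_Sn, IHN. rewrite H by lia. change plus with Cplus. Ceq. ring.
    intros; apply H; lia.
Qed.

Lemma formal_unique a : formal_solution a -> forall n, a n = RtoC (bseq n).
Proof.
  intros Ha. set (D := fun n => (a n - RtoC (bseq n))%C).
  assert (Hrel : forall m, sum_n (fun n => (RtoC (shift_coef n m) * D n)%C) m =
                           match m with O => RtoC 0 | S m' => D m' end).
  { intros m. unfold D.
    rewrite (sum_n_ext _ (fun n => (RtoC (shift_coef n m) * a n - RtoC (shift_coef n m * bseq n))%C))
      by (intros; rewrite RtoC_mult; Ceq; ring).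
    rewrite sum_n_C_sub, sum_n_RtoC, bseq_rel, Ha.
    destruct m as [|[|m]].
    - replace (Nat.eqb 0 1) with false by reflexivity. rewrite RtoC_plus. Ceq. ring.
    - replace (Nat.eqb 1 1) with true by reflexivity. rewrite RtoC_plus. Ceq. ring.
    - replace (Nat.eqb (S (S m)) 1) with false by reflexivity. rewrite RtoC_plus. Ceq. ring. }
  assert (HD : forall m, D m = RtoC 0).
  { intros m. induction m as [m IH] using (well_founded_induction lt_wf).
    specialize (Hrel m). destruct m as [|m'].
    - rewrite sum_O, shift_coef_diag in Hrel. rewrite <- Hrel. ring.
    - rewrite sum_Sn, sum_n_C_zero in Hrel.
      + rewrite shift_coef_diag in Hrel. rewrite (IH m') in Hrel by lia.
        change plus with Cplus in Hrel. rewrite <- Hrel. ring.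
      + intros n Hn. rewrite IH by lia. ring. }
  intros n. specialize (HD n). unfold D in HD. apply Ceq_minus. exact HD.
Qed.

Lemma ray_lower u : Cmod u = 1 -> u <> RtoC 1 ->
  exists d, 0 < d /\ forall r t, 0 <= r -> 0 <= t -> d * r <= Cmod (RtoC r * u - RtoC t)%C.
Proof.
  intros Hu Hu1. destruct u as [u1 u2].
  assert (Hs : u1 ^ 2 + u2 ^ 2 = 1).
  { unfold Cmod in Hu. simpl in Hu.
    pose proof (sqrt_sqrt (u1 * (u1 * 1) + u2 * (u2 * 1))) as E.
    rewrite Hu in E. simpl. nra. }
  assert (Hsq : forall d r t, 0 <= d * r -> (d * r) ^ 2 <= (r * u1 - t) ^ 2 + (r * u2) ^ 2 ->
             d * r <= Cmod (RtoC r * (u1, u2) - RtoC t)%C).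
  { intros d r t Hdr H. unfold Cmod. simpl.
    rewrite <- (sqrt_pow2 (d * r)) by exact Hdr. apply sqrt_le_1_alt. simpl in H. nra. }
  destruct (Rle_dec u1 0) as [Hle|Hgt].
  - exists 1. split. lra. intros r t Hr Ht. apply Hsq. lra.
    assert (r * u1 <= 0) by nra. nra.
  - assert (Hu2 : u2 <> 0).
    { intro E. subst u2. apply Hu1. assert (u1 = 1) by nra. subst u1. reflexivity. }
    exists (Rabs u2). split. apply Rabs_pos_lt. auto.
    intros r t Hr Ht. apply Hsq. apply Rmult_le_pos. apply Rabs_pos. lra.
    rewrite Rpow_mult_distr, pow2_abs.
    replace ((r * u2) ^ 2) with (u2 ^ 2 * r ^ 2) by ring. pose proof (pow2_ge_0 (r * u1 - t)). lra.
Qed.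

Lemma geom_C (x A : C) N : x <> 0 -> (x - A)%C <> 0 ->
  (/ (x - A) - sum_n (fun n => match n with O => RtoC 0 | S j => (A ^ j * / x ^ (S j))%C end) N
   = A ^ N * / x ^ N * / (x - A))%C.
Proof.
  intros Hx HxA. induction N.
  - rewrite sum_O. simpl. Ceq. field. auto.
  - rewrite sum_Sn. set (s := sum_n _ N) in *. change plus with Cplus. cbv beta iota.
    transitivity ((/ (x - A) - s) - A ^ N * / x ^ (S N))%C. Ceq. ring.
    rewrite IHN. change (x ^ S N)%C with (x * x ^ N)%C. change (A ^ S N)%C with (A * A ^ N)%C.
    Ceq. field. split; auto. split; auto. apply Cpow_nz. auto.
Qed.

Lemma is_series_Cmul_r (a : nat -> C) l c : is_series a l -> is_series (fun n => (a n * c)%C) (l * c)%C.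
Proof.
  intros H. pose proof (is_series_scal_l c a l H) as H2.
  eapply is_series_ext in H2.
  2: { intros n. change (scal c (a n)) with (c * a n)%C. rewrite Cmult_comm. reflexivity. }
  match type of H2 with is_series _ ?L => replace L with (l * c)%C in H2 end. exact H2.
  change scal with Cmult. Ceq. ring.
Qed.

Lemma is_series_Csub (a b : nat -> C) la lb : is_series a la -> is_series b lb ->
  is_series (fun n => (a n - b n)%C) (la - lb)%C.
Proof. intros Ha Hb. exact (is_series_minus a b la lb Ha Hb). Qed.

Lemma sum_n_Cmul_l (c : C) (f : nat -> C) N : sum_n (fun n => (c * f n)%C) N = (c * sum_n f N)%C.
Proof.
  induction N.
  - rewrite !sum_O. reflexivity.
  - rewrite !sum_Sn, IHN. change plus with Cplus. Ceq. ring.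
Qed.

Lemma is_series_R0 : is_series (fun _ : nat => 0) 0.
Proof.
  pose proof (is_series_Rscal 0 cc _ cc_series) as H.
  eapply is_series_ext in H. 2: { intros n. Req. apply Rmult_0_l. }
  rewrite Rmult_0_l in H. exact H.
Qed.

Lemma asymp : forall a : nat -> C, formal_solution a ->
   forall u : C, Cmod u = 1 -> u <> (RtoC 1) ->
   forall N : nat, exists M r0 : R, forall r : R, r0 <= r ->
     Cmod (Cminus (y0 (Cmult (RtoC r) u)) (formal_partial a N (Cmult (RtoC r) u)))
       <= M / r ^ (S N).
Proof.
  intros a Ha u Hu Hu1 N.
  destruct (ray_lower u Hu Hu1) as [d [Hd Hlow]].
  exists (bb N / d), 1. intros r Hr.
  set (x := (RtoC r * u)%C).
  assert (Hxk : forall k, d * r <= Cmod (x - RtoC (INR (S k)))).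
  { intros k. apply Hlow. lra. apply pos_INR. }
  assert (Hdr : 0 < d * r) by (apply Rmult_lt_0_compat; lra).
  assert (Hmodx : Cmod x = r).
  { unfold x. rewrite Cmod_mult, Hu, Cmod_R, Rabs_pos_eq by lra. ring. }
  assert (Hx0 : x <> 0).
  { intro E. rewrite E, Cmod_0 in Hmodx. lra. }
  assert (Hxne : forall k, (x - RtoC (INR (S k)))%C <> 0).
  { intros k E. specialize (Hxk k). rewrite E, Cmod_0 in Hxk. lra. }
  assert (Hxnp : ~ posint x).
  { intros [k [Hk E]]. destruct k as [|k]; [lia|]. apply (Hxne k). rewrite E. ring. }
  rewrite (y0_ml x Hxnp).
  unfold formal_partial.
  rewrite (sum_n_ext _ (fun n => (RtoC (bseq n) * / x ^ n)%C))
    by (intros n; rewrite (formal_unique a Ha n); reflexivity).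
  set (bt' := fun n k => match n with O => 0 | S j => bt j k end).
  assert (Hbt' : forall n, is_series (bt' n) (bseq n)).
  { intros [|j]. apply is_series_R0. apply bb_is. }
  assert (Hfp : is_series (fun k => sum_n (fun n => (RtoC (bt' n k) * / x ^ n)%C) N)
                          (sum_n (fun n => (RtoC (bseq n) * / x ^ n)%C) N)).
  { apply (is_series_sum_n (fun n k => (RtoC (bt' n k) * / x ^ n)%C)).
    intros n _. apply is_series_Cmul_r. apply is_series_RtoC. apply Hbt'. }
  pose proof (is_series_Csub _ _ _ _ (mlv_is x) Hfp) as Hdiff.
  set (K := / r ^ N * / (d * r)).
  assert (HK : 0 <= K).
  { unfold K. apply Rmult_le_pos; left; apply Rinv_0_lt_compat; auto. apply pow_lt. lra. }
  assert (Hb := is_series_scal_r K _ _ (bb_is N)).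
  assert (Hfin : Cmod (mlv x - sum_n (fun n => (RtoC (bseq n) * / x ^ n)%C) N)%C <= bb N * K).
  { apply (series_norm_le _ _ _ _ Hdiff Hb). intros k.
    set (A := RtoC (INR (S k))).
    assert (E : (mlt x k - sum_n (fun n => (RtoC (bt' n k) * / x ^ n)%C) N)%C =
                (RtoC (cc k) * (A ^ N * / x ^ N * / (x - A)))%C).
    { rewrite mlt_eq. fold A.
      rewrite (sum_n_ext _ (fun n => (RtoC (cc k) *
          match n with O => RtoC 0 | S j => (A ^ j * / x ^ (S j))%C end)%C)).
      - rewrite sum_n_Cmul_l, <- geom_C by (auto; apply Hxne). set (s := sum_n _ N). Ceq. ring.
      - intros [|j]; unfold bt'.
        + Ceq. ring.
        + unfold bt. rewrite RtoC_mult, RtoC_pow. fold A. Ceq. ring. }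
    rewrite E, !Cmod_mult. rewrite Cmod_RtoC_pos by (left; apply cc_pos).
    rewrite Cmod_pow. unfold A. rewrite Cmod_RtoC_pos by apply pos_INR.
    rewrite Cmod_inv by (apply Cpow_nz; auto). rewrite Cmod_pow, Hmodx.
    assert (Hi : Cmod (/ (x - RtoC (INR (S k)))) <= / (d * r)) by (apply Cmod_inv_le; auto).
    unfold bt, K. pose proof (cc_pos k). pose proof (pow_le (INR (S k)) N (pos_INR _)).
    assert (0 < / r ^ N) by (apply Rinv_0_lt_compat, pow_lt; lra).
    replace (cc k * (INR (S k) ^ N * / r ^ N * Cmod (/ (x - RtoC (INR (S k))))))
      with ((cc k * INR (S k) ^ N * / r ^ N) * Cmod (/ (x - RtoC (INR (S k))))) by ring.
    replace (cc k * INR (S k) ^ N * (/ r ^ N * / (d * r)))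
      with ((cc k * INR (S k) ^ N * / r ^ N) * / (d * r)) by ring.
    apply Rmult_le_compat_l; auto.
    apply Rmult_le_pos. apply Rmult_le_pos; lra. left. exact H1. }
  eapply Rle_trans. exact Hfin.
  right. unfold K. simpl. field. repeat split; try lra; apply pow_nonzero; lra.
Qed.

Theorem mainTheorem1 :
  (forall x : C, ~ posint x -> is_series (y0_term x) (y0 x)) /\
  (forall x : C, ~ posint x -> ~ posint (Cplus x (RtoC 1)) ->
     y0 (Cplus x (RtoC 1)) = Cplus (Cmult (Cinv x) (y0 x)) (Cinv x)) /\
  (forall x : C, ~ posint x -> @ex_derive C_AbsRing C_NormedModule y0 x) /\
  (forall n : nat, (1 <= n)%nat ->
     filterlim (fun x : C => Cmult (Cminus x (RtoC (INR n))) (y0 x))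
       (within (fun x : C => x <> RtoC (INR n)) (locally (RtoC (INR n))))
       (locally (RtoC (exp (-1) / INR (fact (n - 1)))))) /\
  (forall x : C, ~ posint x ->
     is_series (fun k : nat =>
        Cmult (RtoC (exp (-1)))
          (Cinv (Cmult (Cminus x (RtoC (INR (S k)))) (RtoC (INR (fact k))))))
       (y0 x)) /\
  (forall a : nat -> C, formal_solution a ->
   forall u : C, Cmod u = 1 -> u <> (RtoC 1) ->
   forall N : nat, exists M r0 : R, forall r : R, r0 <= r ->
     Cmod (Cminus (y0 (Cmult (RtoC r) u)) (formal_partial a N (Cmult (RtoC r) u)))
       <= M / r ^ (S N)).
Proof.
  split; [|split; [|split; [|split; [|split]]]].
  - intros x _. apply y0_is.
  - intros x _ _. apply FE_y0.
  - apply y0_deriv.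
  - apply residue.
  - intros x Hx. rewrite (y0_ml x Hx). apply mlv_is.
  - apply asymp.
Qed.
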